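(* Let $n\ge1$, $\gamma>0$, and let $A:[0,1]^{2n}\to\mathbb{R}_+^{n\times n}$ be a $\mathcal C^1$ matrix-valued function, defining the system $\dot{x} = -[x]A(x,y)\,y$, $\dot{y} = [x]A(x,y)\,y-\gamma y$. Suppose that, for all indices $i,j,k\in\{1,\dots,n\}$ with $k\ne i$, $$A_{ij}+x_i\frac{\partial A_{ij}}{\partial x_i}\ge 0,\qquad \frac{\partial A_{ij}}{\partial x_k}\ge 0$$ (at every point of the domain of $A$). Then the stability condition $\lambda_{\max}([x]A(x,\mathbf 0))<\gamma$ for equilibria $(x,\mathbf 0)$ is monotone: for all $x,z\in[0,1]^n$ with $x\le z$ one has $\lambda_{\max}([x]A(x,\mathbf 0))\le\lambda_{\max}([z]A(z,\mathbf 0))$; in particular, if $(z,\mathbf 0)$ satisfies $\lambda_{\max}([z]A(z,\mathbf 0))<\gamma$, then so does every $(x,\mathbf 0)$ with $x\le z$.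
   Context: For $x\in\mathbb{R}^n$, $[x]$ denotes the diagonal matrix with diagonal $x$. For a nonnegative square matrix $B$, $\lambda_{\max}(B)$ denotes its dominant (Perron) eigenvalue, i.e. its spectral radius. Vector inequalities are entrywise. The equilibria of the system are the points $(x,\mathbf 0)$, $x\in[0,1]^n$. *)

(* Defs.v *)
From HB Require Import structures.
From mathcomp Require Import all_boot all_order all_algebra.
From mathcomp Require Import all_classical all_reals all_analysis.
From mathcomp Require Import complex.
Set Implicit Arguments. Unset Strict Implicit. Unset Printing Implicit Defensive.
Import Order.TTheory GRing.Theory Num.Theory.
Import numFieldNormedType.Exports.
Local Open Scope classical_set_scope.
Local Open Scope ring_scope.

Definition unit_cube (R : realType) (n : nat) : set 'rV[R]_n :=
  [set x | forall i, 0 <= x ord0 i <= 1].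

Definition diagv (R : realType) (n : nat) (x : 'rV[R]_n) : 'M[R]_n := diag_mx x.

(* Spectral radius: the largest modulus of a (complex) eigenvalue.
   For a nonnegative matrix this is its dominant (Perron) eigenvalue. *)
Definition spectral_radius (R : realType) (n : nat) (B : 'M[R]_n) : R :=
  sup [set r : R | exists l : R[i],
         eigenvalue (map_mx (fun a : R => (a%:C)%C) B) l /\ r = Normc.normc l].

Definition partial_x (R : realType) (n : nat) (k : 'I_n)
  (g : 'rV[R]_n * 'rV[R]_n -> R) (p : 'rV[R]_n * 'rV[R]_n) : R :=
  'D_(delta_mx ord0 k, 0) g p.

Definition C1_on (R : realType) (n : nat) (U : set ('rV[R]_n * 'rV[R]_n))
  (g : 'rV[R]_n * 'rV[R]_n -> R) : Prop :=
  open U /\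
  (forall p, U p -> differentiable g p) /\
  (forall v p, U p -> {for p, continuous (fun q => 'D_v g q)}).

(* Main.v *)
Require Import Defs.
From HB Require Import structures.
From mathcomp Require Import all_boot all_order all_algebra.
From mathcomp Require Import all_classical all_reals all_analysis.
From mathcomp Require Import complex.
From mathcomp Require Import ring lra.
Import Order.TTheory GRing.Theory Num.Theory.
Import numFieldNormedType.Exports.
Local Open Scope classical_set_scope.
Local Open Scope ring_scope.

Set Implicit Arguments. Unset Strict Implicit. Unset Printing Implicit Defensive.

Section LA.
Variable R : realType.

Lemma minent n (X E G : 'M[R]_n) : (forall i j, 0 <= E i j) ->
  (forall i j, 0 <= G i j) -> (forall i, \sum_k G i k < 1) ->
  X = E + G *m X -> forall i j, 0 <= X i j.
Proof.
move=> E0 G0 G1 eX i j; rewrite leNgt; apply/negP => Xneg.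
have [[a b] _ Hmin] := @real_arg_minP _ _ (i, j) xpredT (fun p : 'I_n * 'I_n => X p.1 p.2)
  isT (fun p _ => num_real _).
have mneg : X a b < 0 by apply: le_lt_trans (Hmin (i, j) isT) Xneg.
have eab : X a b = E a b + \sum_k G a k * X k b by rewrite {1}eX !mxE.
have h1 : (\sum_k G a k) * X a b <= \sum_k G a k * X k b.
  rewrite mulr_suml; apply: ler_sum => k _; apply: ler_wpM2l => //.
  exact: (Hmin (k, b) isT).
have h2 : X a b < (\sum_k G a k) * X a b.
  have := G1 a; move: (\sum_k G a k) => sg hs; nra.
have := E0 a b; lra.
Qed.

Lemma det_horner n (C : 'M[R]_n) s : \det (s%:M - C) = (char_poly C).[s].
Proof.
rewrite /char_poly -horner_evalE -det_map_mx; congr (\det _).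
by apply/matrixP => i j; rewrite !mxE rmorphB rmorphMn /= !horner_evalE hornerX hornerC.
Qed.

Lemma adj_horner n (C : 'M[R]_n) s i j :
  \adj (s%:M - C) i j = (\adj (char_poly_mx C) i j).[s].
Proof.
have -> : s%:M - C = map_mx (horner_eval s) (char_poly_mx C).
  by apply/matrixP => k l; rewrite !mxE rmorphB rmorphMn /= !horner_evalE hornerX hornerC.
by rewrite -map_mx_adj mxE.
Qed.

Definition nnmx n (M : 'M[R]_n) := forall i j, 0 <= M i j.

Lemma row_le_tot n (M : 'M[R]_n) i : nnmx M -> \sum_k M i k <= \sum_a \sum_b M a b.
Proof.
move=> M0; rewrite [X in _ <= X](bigD1 i) //= lerDl; apply: sumr_ge0 => a _.
by apply: sumr_ge0 => b _.
Qed.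

Lemma inv_large n (C : 'M[R]_n) s : nnmx C -> \sum_a \sum_b C a b < s ->
  (s%:M - C) \in unitmx -> nnmx (invmx (s%:M - C)).
Proof.
move=> C0 Cs U.
have s0 : 0 < s.
  apply: le_lt_trans Cs; apply: sumr_ge0 => a _; exact: sumr_ge0.
set X := invmx _.
have h := mulmxV U; rewrite -/X mulmxBl mul_scalar_mx in h.
have eX : X = s^-1 *: 1%:M + (s^-1 *: C) *m X.
  rewrite -scalemxAl -scalerDr -h subrK scalerA mulVf ?scale1r //.
  by rewrite gt_eqF.
apply: (minent _ _ _ eX).
- by move=> i j; rewrite !mxE; apply: mulr_ge0; [rewrite invr_ge0; exact: ltW | exact: ler0n].
- by move=> i j; rewrite !mxE; apply: mulr_ge0; [rewrite invr_ge0; exact: ltW | apply: C0].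
- move=> i; under eq_bigr do rewrite mxE; rewrite -mulr_sumr.
  rewrite ltr_pdivrMl // mulr1; apply: le_lt_trans Cs; exact: row_le_tot.
Qed.

Lemma inv_step n (C : 'M[R]_n) s0 d : nnmx (invmx (s0%:M - C)) ->
  (s0%:M - C) \in unitmx -> ((s0 - d)%:M - C) \in unitmx -> 0 <= d ->
  d * \sum_a \sum_b (invmx (s0%:M - C)) a b < 1 ->
  nnmx (invmx ((s0 - d)%:M - C)).
Proof.
move=> F0nn U0 U1 d0 dlt.
set F0 := invmx (s0%:M - C); set X := invmx _.
have h : (s0%:M - C) *m X - d *: X = 1%:M.
  have := mulmxV U1; rewrite -/X.
  rewrite (_ : (s0 - d)%:M - C = (s0%:M - C) - d%:M); last first.
    by rewrite raddfB /= addrAC.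
  by rewrite mulmxBl mul_scalar_mx.
have eX : X = F0 + (d *: F0) *m X.
  have e1 : X = F0 *m ((s0%:M - C) *m X) by rewrite mulmxA mulVmx // mul1mx.
  rewrite {1}e1 -[(s0%:M - C) *m X](subrK (d *: X)) h mulmxDr mulmx1.
  by rewrite -scalemxAl -scalemxAr.
apply: (minent _ _ _ eX).
- exact: F0nn.
- by move=> i j; rewrite !mxE; apply: mulr_ge0; [exact: d0 | exact: F0nn].
- move=> i; under eq_bigr do rewrite mxE; rewrite -mulr_sumr.
  apply: le_lt_trans dlt; apply: ler_wpM2l => //; exact: row_le_tot.
Qed.

Lemma poly_right_ge0 (p : {poly R}) a : (forall s, a < s -> 0 <= p.[s]) -> 0 <= p.[a].
Proof.
move=> H; rewrite leNgt; apply/negP => pa.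
have := cvgr_lt p.[a] (@continuous_horner R p a) 0 pa.
move=> [e /= e0 He].
have : ball a e (a + e / 2).
  rewrite /ball /= opprD addrA subrr sub0r normrN gtr0_norm; lra.
move=> /He /=; rewrite ltNge H //; lra.
Qed.

Lemma inv_entry n (M : 'M[R]_n) i j : \det M != 0 ->
  invmx M i j = (\det M)^-1 * \adj M i j.
Proof.
by move=> d0; rewrite /invmx unitmxE unitfE d0 mxE.
Qed.

Lemma sign_helper (d x : R) : d != 0 -> (0 <= d^-1 * x) = (0 <= x * d).
Proof.
move=> d0; have d2 : 0 < d ^+ 2 by rewrite lt0r sqr_ge0 sqrf_eq0 d0.
have e : x * d = (d^-1 * x) * d ^+ 2.
  by field.
have e' : d^-1 * x = (x * d) / d ^+ 2.
  by rewrite e mulfK // expf_neq0.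
apply/idP/idP => h; first by rewrite e mulr_ge0 // ltW.
by rewrite e' mulr_ge0 // invr_ge0 ltW.
Qed.

Lemma inv_nonneg n (C : 'M[R]_n) t : nnmx C ->
  (forall s, t <= s -> \det (s%:M - C) != 0) -> nnmx (invmx (t%:M - C)).
Proof.
move=> C0 Hdet.
have U s : t <= s -> (s%:M - C) \in unitmx by move=> ts; rewrite unitmxE unitfE Hdet.
pose P s := nnmx (invmx (s%:M - C)).
pose K := Num.max t (\sum_a \sum_b C a b + 1).
have PK s : K <= s -> P s.
  move=> Ks; apply: inv_large => //.
    by apply: lt_le_trans Ks; rewrite lt_max ltrDl ltr01 orbT.
  by apply: U; apply: le_trans Ks; rewrite le_max lexx.
pose S := [set a | t <= a /\ forall s, a <= s -> P s].
have SK : S K by split; [rewrite le_max lexx | exact: PK].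
have lbS : lbound S t by move=> b [].
have hinf : has_inf S by split; [exists K | exists t].
set a := inf S.
have ta : t <= a by apply: lb_le_inf => //; exists K.
have Pright s : a < s -> P s.
  move=> als; have e0 : 0 < s - a by rewrite subr_gt0.
  have [b Sb bs] := inf_adherent e0 hinf.
  rewrite addrC subrK in bs; case: Sb => _ Pb; apply: Pb; exact: ltW.
have Pa : P a.
  move=> i j.
  pose q := \adj (char_poly_mx C) i j * char_poly C.
  have qa : 0 <= q.[a].
    apply: poly_right_ge0 => s als.
    have d0 : \det (s%:M - C) != 0 by apply: Hdet; apply: le_trans (ltW als).
    have := Pright s als i j; rewrite inv_entry //.
    rewrite /q hornerM -adj_horner -det_horner.
    by rewrite sign_helper.
  have d0 : \det (a%:M - C) != 0 by apply: Hdet.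
  rewrite /P inv_entry //.
  move: qa; rewrite /q hornerM -adj_horner -det_horner.
  by rewrite sign_helper.
have [ta'|] := eqVneq t a; first by rewrite ta'.
move=> tna; have tlta : t < a by rewrite lt_neqAle tna ta.
exfalso.
pose F0 := invmx (a%:M - C).
pose T := \sum_a \sum_b F0 a b.
have T0 : 0 <= T by apply: sumr_ge0 => k _; apply: sumr_ge0 => l _; exact: Pa.
pose dl := Num.min (a - t) (2 * (T + 1))^-1.
have dl0 : 0 < dl by rewrite lt_min subr_gt0 tlta invr_gt0; lra.
have dlat : dl <= a - t by rewrite ge_min lexx.
have Sad : S (a - dl).
  split; first by lra.
  move=> s ads; have [as_|sa] := leP a s.
    have [eas|als] := eqVneq a s; first by rewrite -eas.
    by apply: Pright; rewrite lt_neqAle als as_.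
  have -> : s = a - (a - s) by rewrite opprB addrC subrK.
  apply: inv_step => //.
  - by apply: U.
  - by apply: U; rewrite opprB addrC subrK; lra.
  - by rewrite subr_ge0 ltW.
  - have dlT : dl <= (2 * (T + 1))^-1 by rewrite ge_min lexx orbT.
    apply: le_lt_trans (_ : dl * T < 1).
      by apply: ler_wpM2r => //; lra.
    apply: le_lt_trans (_ : (2 * (T + 1))^-1 * T < 1); first by apply: ler_wpM2r.
    rewrite mulrC ltr_pdivrMr; lra.
have := ge_inf hinf.2 Sad; rewrite -/a; lra.
Qed.

Lemma cw n (C : 'M[R]_n) (u : 'rV[R]_n) r : nnmx C ->
  (forall s, r <= s -> \det (s%:M - C) != 0) -> (forall j, 0 <= u 0 j) ->
  (forall j, r * u 0 j <= (u *m C) 0 j) -> u = 0.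
Proof.
move=> C0 Hdet u0 uC.
have F0 := inv_nonneg C0 Hdet.
have U : (r%:M - C) \in unitmx by rewrite unitmxE unitfE Hdet.
set w := u *m (r%:M - C).
have eu : u = w *m invmx (r%:M - C) by rewrite /w -mulmxA mulmxV // mulmx1.
apply/rowP => j; rewrite mxE; apply/eqP; rewrite eq_le u0 andbT.
rewrite eu mxE; apply: sumr_le0 => k _.
apply: mulr_le0_ge0; last exact: F0.
rewrite /w mulmxBr mul_mx_scalar !mxE subr_le0 mulrC; have := uC k; by rewrite mxE mulrC.
Qed.

Local Open Scope complex_scope.
Local Notation toC := (real_complex R).

Lemma normcE (z : R[i]) : `|z| = (Normc.normc z)%:C.
Proof. by case: z. Qed.

Lemma normc_real (x : R) : Normc.normc (x%:C)%C = `|x|.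
Proof. by rewrite /= expr0n /= addr0 sqrtr_sqr. Qed.

Lemma normc_ge0 (z : R[i]) : 0 <= Normc.normc z.
Proof. by case: z => a b; rewrite /= sqrtr_ge0. Qed.

Lemma eig_ineq n (B : 'M[R]_n) (l : R[i]) (v : 'rV[R[i]]_n) :
  v *m map_mx toC B = l *: v -> forall j,
  Normc.normc l * Normc.normc (v 0 j) <= \sum_i Normc.normc (v 0 i) * `|B i j|.
Proof.
move=> ev j.
have e : l * v 0 j = \sum_i v 0 i * (B i j)%:C.
  move/matrixP: ev => /(_ 0 j); rewrite !mxE => <-.
  by apply: eq_bigr => i _; rewrite mxE.
have h : `|\sum_i v 0 i * (B i j)%:C| <= \sum_i `|v 0 i * (B i j)%:C|.
  exact: ler_norm_sum.
have h2 : \sum_i `|v 0 i * (B i j)%:C| = (\sum_i Normc.normc (v 0 i) * `|B i j|)%:C.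
  rewrite rmorph_sum; apply: eq_bigr => i _; by rewrite normrM !normcE normc_real rmorphM.
by rewrite -e normrM !normcE -rmorphM h2 lecR in h.
Qed.

Lemma col_le_tot n (M : 'M[R]_n) j :
  \sum_i `|M i j| <= \sum_a \sum_b `|M a b|.
Proof.
apply: ler_sum => a _; rewrite [X in _ <= X](bigD1 j) //= lerDl.
by apply: sumr_ge0 => b _.
Qed.

Lemma eig_bound n (B : 'M[R]_n) l : eigenvalue (map_mx toC B) l ->
  Normc.normc l <= \sum_a \sum_b `|B a b|.
Proof.
move/eigenvalueP => [v ev vn0].
have [j0 vj0] : exists j, v 0 j != 0.
  apply/existsP; apply: contraR vn0 => /existsPn H.
  by apply/eqP/rowP => j; rewrite mxE; apply/eqP; rewrite -[_ == _]negbK H.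
have [j _ Hmax] := @real_arg_maxP _ _ j0 xpredT
   (fun j => Normc.normc (v 0 j)) isT (fun _ _ => num_real _).
have pos0 : 0 < Normc.normc (v 0 j0).
  rewrite lt_def normc_ge0 andbT; apply/eqP => /Normc.eq0_normc; exact/eqP.
have pos : 0 < Normc.normc (v 0 j) by apply: lt_le_trans pos0 (Hmax j0 isT).
have h := eig_ineq ev j.
have h2 : \sum_i Normc.normc (v 0 i) * `|B i j| <=
          Normc.normc (v 0 j) * \sum_a \sum_b `|B a b|.
  apply: le_trans (_ : Normc.normc (v 0 j) * \sum_i `|B i j| <= _); last first.
    by apply: ler_wpM2l; [exact: ltW | exact: col_le_tot].
  rewrite mulr_sumr; apply: ler_sum => i _; apply: ler_wpM2r => //.
  exact: Hmax.
have := le_trans h h2; rewrite mulrC ler_pM2l //.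
Qed.

Lemma eig_ub n (B : 'M[R]_n) : has_ubound [set r : R | exists l : R[i],
         eigenvalue (map_mx (fun a : R => (a%:C)%C) B) l /\ r = Normc.normc l].
Proof.
exists (\sum_a \sum_b `|B a b|) => r [l [ev ->]]; exact: eig_bound.
Qed.

Lemma det_not_eig n (C : 'M[R]_n) s : spectral_radius C < s -> \det (s%:M - C) != 0.
Proof.
move=> lt; apply/negP => /eqP d0.
have ev : eigenvalue (map_mx toC C) (s%:C).
  rewrite eigenvalue_root_char -map_char_poly /root horner_map /=.
  by rewrite -det_horner d0 rmorph0.
have := ub_le_sup (eig_ub C) (ex_intro _ (s%:C) (conj ev erefl)).
rewrite normc_real -/(spectral_radius C) => h.
have := ler_norm s; lra.
Qed.

Lemma rho_mono n (B C : 'M[R]_n) : (0 < n)%N -> nnmx B ->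
  (forall i j, B i j <= C i j) -> spectral_radius B <= spectral_radius C.
Proof.
move=> n0 B0 BC; have C0 : nnmx C by move=> i j; apply: le_trans (B0 i j) (BC i j).
apply: ge_sup.
  have [l hl] := eigenvalue_closed (map_mx (fun a : R => (a%:C)%C) B) n0.
  by exists (Normc.normc l), l.
move=> r [l [ev ->]]; rewrite leNgt; apply/negP => lt.
case/eigenvalueP: ev => v evv vn0.
pose u := \row_j Normc.normc (v 0 j).
have u0 : u = 0.
  apply: (@cw _ C u (Normc.normc l) C0).
  - by move=> s ls; apply: det_not_eig; apply: lt_le_trans ls.
  - by move=> j; rewrite mxE normc_ge0.
  - move=> j; rewrite mxE; apply: le_trans (eig_ineq evv j) _; rewrite mxE.
    apply: ler_sum => i _; rewrite mxE ger0_norm //; apply: ler_wpM2l => //.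
    exact: normc_ge0.
move/negP: vn0; apply; apply/eqP/rowP => j.
move/matrixP: u0 => /(_ 0 j); rewrite !mxE => /Normc.eq0_normc ->.
by [].
Qed.

End LA.

Section CALC.
Variable R : realType.

Lemma dir_compose (V W : normedModType R) (g : V -> W) (p w : V) (t : R) :
  derivable g (p + t *: w) w ->
  is_derive t 1 (fun s : R => g (p + s *: w)) ('D_w g (p + t *: w)).
Proof.
move=> dg.
have E : (fun h : R => h^-1 *: (((fun s : R => g (p + s *: w)) \o shift t) (h *: 1) - g (p + t *: w)))
   = (fun h : R => h^-1 *: ((g \o shift (p + t *: w)) (h *: w) - g (p + t *: w))).
  apply: funext => h /=.
  have ha : h%:A = h :> R by rewrite -[RHS]mulr1.
  by rewrite ha scalerDl addrCA.
apply: DeriveDef; first by rewrite /derivable E.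
by rewrite /derive E.
Qed.

Lemma pair_decomp n (d : 'rV[R]_n) :
  (d, 0 : 'rV[R]_n) = \sum_k d 0 k *: ((delta_mx 0 k : 'rV[R]_n), (0 : 'rV[R]_n)).
Proof.
apply: injective_projections => /=.
  rewrite (big_morph (fun p : 'rV[R]_n * 'rV[R]_n => p.1) (id1 := 0) (op1 := +%R)) //.
  exact: row_sum_delta.
rewrite (big_morph (fun p : 'rV[R]_n * 'rV[R]_n => p.2) (id1 := 0) (op1 := +%R)) //=.
by rewrite big1 // => k _; rewrite scaler0.
Qed.

Lemma diff_pair_decomp n (f : 'rV[R]_n * 'rV[R]_n -> R) q (d : 'rV[R]_n) :
  'd f q (d, 0) = \sum_k d 0 k * 'd f q (delta_mx 0 k, 0).
Proof.
rewrite {1}(pair_decomp d) linear_sum; apply: eq_bigr => k _.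
by rewrite linearZ.
Qed.

Lemma D_decomp n (f : 'rV[R]_n * 'rV[R]_n -> R) q (d : 'rV[R]_n) :
  differentiable f q -> 'D_(d, 0) f q = \sum_k d 0 k * partial_x k f q.
Proof.
move=> df; rewrite deriveE // diff_pair_decomp; apply: eq_bigr => k _.
by rewrite /partial_x deriveE.
Qed.

Lemma entry_mono n (A : 'rV[R]_n -> 'rV[R]_n -> 'M[R]_n)
  (U : set ('rV[R]_n * 'rV[R]_n)) x z i j :
  [set p | unit_cube p.1 /\ unit_cube p.2] `<=` U ->
  (forall p, U p -> differentiable (fun p => A p.1 p.2 i j) p) ->
  (forall x y, unit_cube x -> unit_cube y ->
      0 <= A x y i j + x ord0 i * partial_x i (fun p => A p.1 p.2 i j) (x, y)) ->
  (forall x y, unit_cube x -> unit_cube y -> forall k, k != i ->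
      0 <= partial_x k (fun p => A p.1 p.2 i j) (x, y)) ->
  unit_cube x -> unit_cube z -> (forall k, x 0 k <= z 0 k) ->
  x 0 i * A x 0 i j <= z 0 i * A z 0 i j.
Proof.
move=> HU Hdiff H1 H2 cx cz xz.
pose g : 'rV[R]_n * 'rV[R]_n -> R := fun p => A p.1 p.2 i j.
set d := z - x.
have d0 k : 0 <= d 0 k by rewrite !mxE subr_ge0.
have cube s : 0 <= s <= 1 -> unit_cube (x + s *: d).
  move=> /andP[s0 s1] k; rewrite !mxE.
  have := cx k; have := cz k; have := xz k; move=> ? /andP[? ?] /andP[? ?].
  apply/andP; split; nra.
have cube0 : unit_cube (0 : 'rV[R]_n) by move=> k; rewrite mxE lexx ler01.
have pt s : (x, 0) + s *: (d, 0) = (x + s *: d, 0 : 'rV[R]_n).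
  by apply: injective_projections => /=; rewrite ?scaler0 ?addr0.
have dg s : 0 <= s <= 1 -> differentiable g ((x, 0) + s *: (d, 0)).
  by move=> hs; rewrite pt; apply: Hdiff; apply: HU; split => //=; exact: cube.
pose psi s := g ((x, 0) + s *: (d, 0)).
have Dpsi (s : R) : 0 <= s <= 1 ->
    is_derive s 1 psi (\sum_k d 0 k * partial_x k g (x + s *: d, 0)).
  move=> hs; apply: is_derive_eq.
    by apply: dir_compose; apply: diff_derivable; exact: dg.
  have dq : differentiable g (x + s *: d, 0) by rewrite -pt; exact: dg.
  rewrite pt; exact: D_decomp.
pose lin := fun s : R => x 0 i + s * d 0 i.
have Dlin (s : R) : is_derive s 1 lin (d 0 i).
  apply: is_derive_eq; rewrite add0r mul1r scaler0 add0r; exact: mulr1.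
pose phi : R -> R := lin * psi.
have Dphi (s : R) (hs : 0 <= s <= 1) := is_deriveM (Dlin s) (Dpsi s hs).
have i01 (s : R) : s \in `[0, 1] -> 0 <= s <= 1 by rewrite in_itv.
have o01 (s : R) : s \in `]0, 1[ -> 0 <= s <= 1.
  by rewrite in_itv /= => /andP[? ?]; apply/andP; split; apply: ltW.
have key : phi 0 <= phi 1.
  apply: (@ger0_derive1_ndecr _ phi 0 1) => //.
  - by move=> s hs; case: (Dphi s (o01 s hs)).
  - move=> s hs; rewrite derive1E; case: (Dphi s (o01 s hs)) => _ ->.
    have hs' := o01 s hs; have cq := cube s hs'.
    have e1 : lin s = (x + s *: d) 0 i by rewrite /lin !mxE.
    have e2 : psi s = A (x + s *: d) 0 i j by rewrite /psi pt.
    rewrite e1 e2 (bigD1 i) //=.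
    have h1 := H1 (x + s *: d) 0 cq cube0.
    have h2 : 0 <= \sum_(k | k != i) d 0 k * partial_x k g (x + s *: d, 0).
      by apply: sumr_ge0 => k ki; apply: mulr_ge0; [exact: d0 | exact: H2].
    have qi : 0 <= (x + s *: d) 0 i by case/andP: (cq i).
    have di := d0 i.
    have E : forall v : 'rV[R]_n, v ord0 i = v 0 i.
      by move=> v; congr (v _ i); apply: val_inj.
    rewrite -/g E in h1.
    move: h1 h2 qi di; rewrite /GRing.scale /=.
    move: (A _ 0 i j) (partial_x i g _) (\sum_(k | k != i) _) ((x + _) 0 i) (d 0 i).
    move=> a p S q di h1 h2 qi d0i; nra.
  - apply: continuous_in_subspaceT => s /set_mem hs.
    case: (Dphi s (i01 s hs)) => + _.
    by move/derivable1_diffP/differentiable_continuous.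
have e0 : phi 0 = x 0 i * A x 0 i j.
  rewrite /phi mulrfctE /lin /psi pt mul0r addr0 scale0r addr0 //.
have e1 : phi 1 = z 0 i * A z 0 i j.
  have zx : x + 1 *: d = z by rewrite scale1r /d addrC subrK.
  by rewrite /phi mulrfctE /lin /psi pt zx mul1r /d !mxE addrCA subrr addr0.
by rewrite -e0 -e1.
Qed.

End CALC.

Unset Implicit Arguments.

Theorem proposition2 (R : realType) (n : nat) (gamma : R)
  (A : 'rV[R]_n -> 'rV[R]_n -> 'M[R]_n) :
  (0 < n)%N -> 0 < gamma ->
  (* A maps [0,1]^{2n} into nonnegative matrices *)
  (forall x y, unit_cube x -> unit_cube y -> forall i j, 0 <= A x y i j) ->
  (* A is C^1 (on an open neighbourhood of [0,1]^{2n}) *)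
  (exists U : set ('rV[R]_n * 'rV[R]_n),
      [set p | unit_cube p.1 /\ unit_cube p.2] `<=` U /\
      forall i j, C1_on U (fun p => A p.1 p.2 i j)) ->
  (forall x y, unit_cube x -> unit_cube y -> forall i j,
      0 <= A x y i j + x ord0 i * partial_x i (fun p => A p.1 p.2 i j) (x, y)) ->
  (forall x y, unit_cube x -> unit_cube y -> forall i j k, k != i ->
      0 <= partial_x k (fun p => A p.1 p.2 i j) (x, y)) ->
  (forall x z, unit_cube x -> unit_cube z -> (forall i, x ord0 i <= z ord0 i) ->
      spectral_radius (diagv x *m A x 0) <= spectral_radius (diagv z *m A z 0))
  /\
  (forall x z, unit_cube x -> unit_cube z -> (forall i, x ord0 i <= z ord0 i) ->
      spectral_radius (diagv z *m A z 0) < gamma ->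
      spectral_radius (diagv x *m A x 0) < gamma).
Proof.
move=> n0 g0 A0 [U [HU HC]] H1 H2.
have cube0 : unit_cube (0 : 'rV[R]_n) by move=> k; rewrite mxE lexx ler01.
have mono : forall x z, unit_cube x -> unit_cube z -> (forall i, x ord0 i <= z ord0 i) ->
    spectral_radius (diagv x *m A x 0) <= spectral_radius (diagv z *m A z 0).
  move=> x z cx cz xz; apply: rho_mono => //.
    move=> i j; rewrite /diagv mul_diag_mx mxE; apply: mulr_ge0.
      by case/andP: (cx i).
    exact: A0.
  move=> i j; rewrite /diagv !mul_diag_mx !mxE.
  apply: (@entry_mono R n A U x z i j HU) => //.
  - by move=> p Up; have [_ [hd _]] := HC i j; exact: hd.
  - by move=> x' y' cx' cy'; exact: H1.
  - by move=> x' y' cx' cy' k ki; exact: H2.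
split; first exact: mono.
move=> x z cx cz xz lt; exact: le_lt_trans (mono x z cx cz xz) lt.
Qed.
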